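(* Let $(\alpha,\beta)\in Q$ and let $x^*=\lim_kx_k$ for the GAFS sequence. There exists $L_2\ge1$ such that for all $k\ge L_2$, $$\frac{\gamma_k}{c^Tx_k-c^Tx^*}<L_2.$$
   Context: Let $A\in\mathbb{R}^{m\times n}$ have rank $m$, $b\in\mathbb{R}^m$, $c\in\mathbb{R}^n$. Primal LP: $\min c^Tx$ s.t. $Ax=b$, $x\ge 0$. Standing assumptions: the primal has a strictly positive feasible point; $c^Tx$ is not constant on the primal feasible region; the LP has an optimal solution. For $u\in\mathbb{R}^n$, $\gamma(u)=\max\{u_i: u_i>0\}$. For $x>0$, $X=\mathrm{diag}(x)$. GAFS sequence: fix $\alpha\in(0,1)$, $\beta\in[0,1)$, and $x_0>0$ with $Ax_0=b$. For $k\ge0$ let $X_k=\mathrm{diag}(x_k)$, $y_k=(AX_k^2A^T)^{-1}AX_k^2c$, $s_k=c-A^Ty_k$. Set $x_1=x_0-\alpha\frac{X_0^2s_0}{\gamma(X_0s_0)}$ and, for $k\ge1$, $x_{k+1}=x_k-\alpha\frac{X_k^2s_k}{\gamma(X_ks_k)}+\beta\frac{x_k-x_{k-1}}{\|X_k^{-1}(x_k-x_{k-1})\|_\infty}$ (all quantities assumed well defined). Write $\beta_k=\beta/\|X_k^{-1}(x_k-x_{k-1})\|_\infty$ ($k\ge1$), $\gamma_k=\prod_{j=1}^k\beta_j$. $Q=\{(\alpha,\beta): 0<\alpha<1,\ 0\le\beta<1/\phi,\ \alpha+\beta\le 2/3\}$ with $\phi=(1+\sqrt5)/2$. *)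

(* Defs.v *)
(* R is an arbitrary real closed field (covers the reals). *)
From HB Require Import structures.
From mathcomp Require Import all_boot all_order all_algebra.
Set Implicit Arguments. Unset Strict Implicit. Unset Printing Implicit Defensive.
Import Order.TTheory GRing.Theory Num.Theory.
Local Open Scope ring_scope.

Section Defs.
Variable R : rcfType.

Definition dotv n (u v : 'cV[R]_n) : R := (u^T *m v) 0 0.

(* gamma(u) = max {u_i : u_i > 0}; equals that max whenever some u_i > 0 *)
Definition gammaf n (u : 'cV[R]_n) : R := \big[Num.max/0]_(i < n) u i 0.

Definition ninf n (u : 'cV[R]_n) : R := \big[Num.max/0]_(i < n) `|u i 0|.

Definition Xdiag n (x : 'cV[R]_n) : 'M[R]_n := diag_mx x^T.

Definition posv n (x : 'cV[R]_n) : Prop := forall i, 0 < x i 0.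
Definition nnegv n (x : 'cV[R]_n) : Prop := forall i, 0 <= x i 0.

Definition feasible m n (A : 'M[R]_(m, n)) (b : 'cV[R]_m) (x : 'cV[R]_n) : Prop :=
  A *m x = b /\ nnegv x.

Definition ydual m n (A : 'M[R]_(m, n)) (c : 'cV[R]_n) (x : 'cV[R]_n) : 'cV[R]_m :=
  let X := Xdiag x in
  invmx (A *m X *m X *m A^T) *m (A *m X *m X *m c).
Definition sdual m n (A : 'M[R]_(m, n)) (c : 'cV[R]_n) (x : 'cV[R]_n) : 'cV[R]_n :=
  c - A^T *m ydual A c x.

Definition afsdir m n (A : 'M[R]_(m, n)) (c : 'cV[R]_n) (x : 'cV[R]_n) : 'cV[R]_n :=
  let X := Xdiag x in
  (gammaf (X *m sdual A c x))^-1 *: (X *m X *m sdual A c x).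

Definition momnorm n (xk xk1 : 'cV[R]_n) : R := ninf (invmx (Xdiag xk) *m (xk - xk1)).

Definition betak n (beta : R) (x : nat -> 'cV[R]_n) (k : nat) : R :=
  beta / momnorm (x k) (x k.-1).

Definition gammak n (beta : R) (x : nat -> 'cV[R]_n) (k : nat) : R :=
  \prod_(1 <= j < k.+1) betak beta x j.

Definition golden : R := (1 + Num.sqrt 5) / 2.

Definition inQ (alpha beta : R) : Prop :=
  0 < alpha /\ alpha < 1 /\ 0 <= beta /\ beta < golden^-1 /\ alpha + beta <= 2 / 3.

Definition conv n (x : nat -> 'cV[R]_n) (xs : 'cV[R]_n) : Prop :=
  forall e : R, 0 < e -> exists N : nat, forall k, (N <= k)%N -> ninf (x k - xs) < e.

End Defs.

(* Main.v *)
Require Import Defs.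
From HB Require Import structures.
From mathcomp Require Import all_boot all_order all_algebra.
Import Order.TTheory GRing.Theory Num.Theory.
From mathcomp Require Import lra ring.
Local Open Scope ring_scope.

Section H.
Variable R : rcfType.

Lemma dotvD n (c u v : 'cV[R]_n) : dotv c (u + v) = dotv c u + dotv c v.
Proof. by rewrite /dotv mulmxDr !mxE. Qed.
Lemma dotvB n (c u v : 'cV[R]_n) : dotv c (u - v) = dotv c u - dotv c v.
Proof. by rewrite /dotv mulmxBr !mxE. Qed.
Lemma dotvZ n (c u : 'cV[R]_n) a : dotv c (a *: u) = a * dotv c u.
Proof. by rewrite /dotv -scalemxAr mxE. Qed.

Lemma ninf_ge n (u : 'cV[R]_n) i : `|u i 0| <= ninf u.
Proof. rewrite /ninf; apply: le_bigmax. Qed.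
Lemma ninf_ge0 n (u : 'cV[R]_n) : 0 <= ninf u.
Proof. rewrite /ninf; apply: bigmax_ge_id. Qed.

Lemma dotv_bound n (c u : 'cV[R]_n) :
  `|dotv c u| <= (\sum_i `|c i 0|) * ninf u.
Proof.
rewrite /dotv mxE mulr_suml.
apply: (le_trans (ler_norm_sum _ _ _)); apply: ler_sum => i _.
by rewrite mxE normrM ler_wpM2l ?normr_ge0 ?ninf_ge.
Qed.
Lemma sqsum n (u : 'cV[R]_n) : (u^T *m u) 0 0 = \sum_i u i 0 ^+ 2.
Proof. by rewrite mxE; apply: eq_bigr => i _; rewrite mxE expr2. Qed.

Lemma sqsum_eq0 n (u : 'cV[R]_n) : (u^T *m u) 0 0 = 0 -> u = 0.
Proof.
rewrite sqsum => H; apply/matrixP => i j; rewrite (ord1 j) mxE.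
have := @psumr_eq0P R _ xpredT (fun i => u i 0 ^+ 2) (fun i _ => sqr_ge0 (u i 0)) H i isT.
by move/eqP; rewrite sqrf_eq0 => /eqP.
Qed.

Lemma sqsum_gt0 n (u : 'cV[R]_n) i : 0 < u i 0 -> 0 < (u^T *m u) 0 0.
Proof.
move=> hi; rewrite sqsum (bigD1 i) //=.
apply: (lt_le_trans (exprn_gt0 2 hi)); rewrite lerDl.
by apply: sumr_ge0 => j _; apply: sqr_ge0.
Qed.

Lemma key m n (A : 'M[R]_(m,n)) (c x : 'cV[R]_n) : row_free A ->
  (forall i, x i 0 != 0) -> (exists i, 0 < (Xdiag x *m sdual A c x) i 0) ->
  0 < dotv c (afsdir A c x).
Proof.
move=> hA hx [i0 hi0].
set X := Xdiag x.
have XT : X^T = X by rewrite /X /Xdiag tr_diag_mx.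
have uP : A *m X *m X *m A^T \in unitmx.
  rewrite -row_free_unit; apply: inj_row_free => v Hv.
  set w := v *m A *m X.
  have Pw : w^T^T *m w^T = 0.
    rewrite trmxK /w !trmx_mul XT !mulmxA.
    by move: Hv; rewrite !mulmxA => ->; rewrite mul0mx.
  have w0 : w = 0 by rewrite -[w]trmxK (@sqsum_eq0 _ w^T) ?Pw ?mxE ?trmx0.
  have vA : v *m A = 0.
    move: w0; rewrite /w /X /Xdiag mul_mx_diag; set vA := v *m A => w0.
    apply/matrixP => a j; rewrite (ord1 a) [RHS]mxE.
    have : (\matrix_(i, j) (vA i j * (x^T) 0 j)) 0 j = 0 by rewrite w0 mxE.
    by rewrite !mxE => /eqP; rewrite mulf_eq0 (negPf (hx j)) orbF => /eqP.
  by apply: (row_free_inj hA); rewrite vA mul0mx.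
rewrite /afsdir -/X dotvZ.
set s := sdual A c x.
have gpos : 0 < gammaf (X *m s).
  apply: (lt_le_trans hi0); rewrite /gammaf; exact: (le_bigmax 0 (fun i => (X *m s) i 0) i0).
apply: mulr_gt0; first by rewrite invr_gt0.
have hc : c = s + A^T *m ydual A c x by rewrite /s /sdual subrK.
have AXXs : A *m (X *m X *m s) = 0.
  rewrite /s /sdual /ydual -/X mulmxBr !mulmxA.

  rewrite mulmxBr !mulmxA.
  have -> : A *m X *m X *m A^T *m invmx (A *m X *m X *m A^T) *m A *m X *m X *m c
    = A *m X *m X *m A^T *m (invmx (A *m X *m X *m A^T) *m (A *m X *m X *m c)) by rewrite !mulmxA.
  by rewrite mulKVmx // subrr.
rewrite /dotv {1}hc raddfD /= mulmxDl trmx_mul trmxK -[_^T *m A *m _]mulmxA AXXs mulmx0 addr0.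
have -> : s^T *m (X *m X *m s) = (X *m s)^T *m (X *m s) by rewrite trmx_mul XT !mulmxA.
exact: (@sqsum_gt0 _ (X *m s) i0 hi0).
Qed.
Lemma aux (xs xj xk P1 P2 : R) : xk < xs -> xj <= xk -> P1 <= P2 ->
  - P1 <= xj - xs -> P2 < xs - xk -> False.
Proof. move=> *; lra. Qed.
End H.

Theorem lemma7 (R : rcfType) (m n : nat)
  (A : 'M[R]_(m, n)) (b : 'cV[R]_m) (c : 'cV[R]_n)
  (hrank : \rank A = m)
  (hint : exists x0 : 'cV[R]_n, A *m x0 = b /\ posv x0)
  (hnc : exists x1 x2 : 'cV[R]_n,
      feasible A b x1 /\ feasible A b x2 /\ dotv c x1 <> dotv c x2)
  (hopt : exists xo : 'cV[R]_n,
      feasible A b xo /\ forall z, feasible A b z -> dotv c xo <= dotv c z)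
  (alpha beta : R) (hQ : inQ alpha beta)
  (x : nat -> 'cV[R]_n)
  (hx0 : A *m x 0%N = b /\ posv (x 0%N))
  (* well-definedness of all quantities *)
  (hwd_x : forall k i, x k i 0 != 0)
  (hwd_g : forall k, exists i, 0 < (Xdiag (x k) *m sdual A c (x k)) i 0)
  (hwd_n : forall k, (1 <= k)%N -> momnorm (x k) (x k.-1) != 0)
  (* GAFS recursion *)
  (hx1 : x 1%N = x 0%N - alpha *: afsdir A c (x 0%N))
  (hxS : forall k, (1 <= k)%N ->
      x k.+1 = x k - alpha *: afsdir A c (x k)
               + (beta / momnorm (x k) (x k.-1)) *: (x k - x k.-1))
  (xs : 'cV[R]_n) (hlim : conv x xs) :
  exists L2 : R, 1 <= L2 /\
    forall k : nat, L2 <= k%:R ->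
      gammak beta x k / (dotv c (x k) - dotv c xs) < L2.
Proof.
move: hQ => [ha [_ [hb _]]].
have hA : row_free A by rewrite /row_free hrank.
have hdk : forall k, 0 < dotv c (afsdir A c (x k)).
  by move=> k; apply: key => //; apply: hwd_g.
set C := dotv c (afsdir A c (x 0%N)).
have hC : 0 < C := hdk 0%N.
have bk0 : forall k, 0 <= betak beta x k.
  by move=> k; rewrite /betak divr_ge0 // /momnorm ninf_ge0.
have gk0 : forall k, 0 <= gammak beta x k.
  by move=> k; rewrite /gammak; apply: prodr_ge0 => j _.
have gS : forall k, gammak beta x k.+1 = gammak beta x k * betak beta x k.+1.
  by move=> k; rewrite /gammak big_nat_recr.
have hD : forall k, alpha * gammak beta x k * C <= dotv c (x k) - dotv c (x k.+1).
  elim=> [|k IH].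
    rewrite hx1 dotvB dotvZ /gammak big_geq // mulr1 -/C; lra.
  rewrite (hxS (k.+1)) // dotvD dotvB dotvZ dotvZ dotvB gS /=.
  have hb' := bk0 k.+1; rewrite /betak /= in hb'.
  have := ler_wpM2l hb' IH.
  have := hdk k.+1.
  rewrite /betak /=; set bb := beta / _.
  set g := gammak beta x k; set dd := dotv c (afsdir A c (x k.+1)).
  move=> h1 h2.
  have h3 : 0 <= alpha * dd by apply: mulr_ge0 => //; apply: ltW.
  have -> : alpha * (g * bb) * C = bb * (alpha * g * C) by ring.
  lra.
have hD0 : forall k, dotv c (x k.+1) <= dotv c (x k).
  move=> k; have := hD k; have : 0 <= alpha * gammak beta x k * C.
    by rewrite mulr_ge0 ?mulr_ge0 // ltW.
  move=> h1 h2; lra.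
have mono : forall k d, dotv c (x (k + d)%N) <= dotv c (x k).
  move=> k; elim=> [|d IH]; first by rewrite addn0.
  by rewrite addnS; apply: le_trans (hD0 _) IH.
have lim : forall k, dotv c xs <= dotv c (x k).
  move=> k; rewrite leNgt; apply/negP => hlt.
  set S := \sum_i `|c i 0|.
  have S0 : 0 <= S by apply: sumr_ge0 => i _.
  have hM : 0 < S + 1 by lra.
  have hde : 0 < (dotv c xs - dotv c (x k)) / (S + 1).
    by rewrite divr_gt0 // subr_gt0.
  have [N HN] := hlim _ hde.
  have h1 := HN (maxn N k) (leq_maxl _ _).
  rewrite ltr_pdivlMr // in h1.
  have h2 := @dotv_bound R n c (x (maxn N k) - xs).
  have h3 : dotv c (x (maxn N k)) <= dotv c (x k).
    by have := mono k (maxn N k - k)%N; rewrite subnKC // leq_maxr.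
  have h4 := @ninf_ge0 R n (x (maxn N k) - xs).
  have h5 : S * ninf (x (maxn N k) - xs) <= (S + 1) * ninf (x (maxn N k) - xs).
    by rewrite ler_wpM2r // lerDl.
  have h6 := lerNnormlW h2.
  rewrite dotvB in h2 h6.
  rewrite -/S in h2.
  rewrite mulrC in h1.
  exact: (@aux R _ _ _ _ _ hlt h3 h5 h6 h1).
have aC : 0 < alpha * C by rewrite mulr_gt0.
exists ((alpha * C)^-1 + 1); split.
  by rewrite lerDr invr_ge0 ltW.
move=> k _.
set g := gammak beta x k; set De := dotv c (x k) - dotv c xs.
have hDe : alpha * C * g <= De.
  have := hD k; have := lim k.+1; rewrite -/g /De => h1 h2.
  have -> : alpha * C * g = alpha * g * C by rewrite mulrAC.
  lra.
have hDe0 : 0 <= De by rewrite /De subr_ge0 lim.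
have hi : 0 < (alpha * C)^-1 by rewrite invr_gt0.
case: (eqVneq De 0) => [->|nz].
  by rewrite invr0 mulr0; lra.
have Dp : 0 < De by rewrite lt0r nz.
have : g / De <= (alpha * C)^-1.
  rewrite ler_pdivrMr //.
  have := ler_wpM2l (ltW hi) hDe.
  by rewrite mulKf // gt_eqF.
move=> h; lra.
Qed.
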